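(* Consider the binary model with unknown prior $\mu^*\in(0,1)$ and unknown bias $\alpha^*$, known cutoff $\hat q$ with $0<\mu^*<\hat q<1$, and assume $\alpha^*\ge\frac{\hat q-\mu^*}{1-\mu^*}$, so that $m^*\in[0,1]$. Then for every $T\ge4$, the policy SEJ satisfies $$\mathrm{Reg}_T\le\Big(\frac{1-\mu^*}{\mu^*}+1\Big)\big(2+\lceil\log_2\log_2T\rceil\big)+1=O(\log\log T).$$
   Context: Binary model: $\Omega=A=\{0,1\}$, sender utility $u_S(a,\omega)=\mathbf 1\{a=1\}$. Both the prior $\mu^*=\Pr(\omega=1)$ and the bias $\alpha^*\in(0,1]$ are fixed across rounds and unknown to the sender. After a signal with Bayesian posterior $\nu=\Pr(\omega=1\mid s)$, the receiver takes action $1$ iff $(1-\alpha^* )\mu^*+\alpha^*\nu\ge\hat q$ (ties in favor of action $1$). Signaling family. For $m\in[0,1]$, the scheme $\pi_m$ sends signal High with probability $1$ in state $1$ and with probability $m$ in state $0$, and sends Low otherwise. Define $m^*$ as the solution of $$(1-\alpha^* )\mu^*+\alpha^*\frac{\mu^*}{\mu^*+(1-\mu^* )m^*}=\hat q,$$ so that High under $\pi_m$ induces action $1$ iff $m\le m^*$. Benchmark and regret. The full-information benchmark value per round is $V^*=\mu^*+(1-\mu^* )m^*$, the optimal probability of inducing action $1$ when $(\mu^*,\alpha^* )$ are known. The regret is $\mathrm{Reg}_T=TV^*-\sum_t\mathbb E[\Pr(\text{action }1\text{ in round }t\mid\text{history})]$. Policy SEJ. Initialize $[a,b]=[0,1]$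 and $\varepsilon=1/2$. While $b-a>1/T$ and rounds remain, run a phase: 1. Set $m=m_{\rm prev}=a$. 2. While $m\le b$ and rounds remain, play $\pi_m$ for one round. If the signal is Low, continue. If the signal is High and the receiver takes action $1$, set $m_{\rm prev}\gets m$ and $m\gets m+\varepsilon$. If the signal is High and the receiver takes action $0$, set $[a,b]\gets[m_{\rm prev},m]$, $\varepsilon\gets\varepsilon^2$, and end the phase. 3. If the inner loop ended because $m>b$, set $[a,b]\gets[m_{\rm prev},b]$ and $\varepsilon\gets\varepsilon^2$. Then play $\pi_a$ in all remaining rounds. *)

(* Defs.v *)
From Stdlib Require Import Reals Lra Lia ZArith.
Open Scope R_scope.

Definition log2R (x : R) : R := ln x / ln 2.
(* Int_part is the floor; ceiling x = - floor (- x) *)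
Definition Rceil (x : R) : Z := (- Int_part (- x))%Z.

Definition receiver_act (mu alpha qhat nu : R) : bool :=
  if Rle_dec qhat ((1 - alpha) * mu + alpha * nu) then true else false.

(* Scheme pi_m: High w.p. 1 in state 1, w.p. m in state 0. *)
Definition prob_high (mu m : R) : R := mu + (1 - mu) * m.
Definition post_high (mu m : R) : R := mu / (mu + (1 - mu) * m).
(* Low is never sent in state 1, so its posterior is 0. *)
Definition post_low : R := 0.

Definition Vstar (mu mstar : R) : R := mu + (1 - mu) * mstar.

(* State of policy SEJ between rounds:
   interval [a,b], step eps, current m, m_prev, and whether the
   exploration is over (then pi_a is played forever). *)
Record sej_state := mkS {
  s_a : R; s_b : R; s_eps : R; s_m : R; s_mprev : R; s_final : bool }.

(* Start of a phase (outer while-test b - a > 1/T). *)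
Definition start_phase (T : nat) (a b eps : R) : sej_state :=
  if Rlt_dec (/ INR T) (b - a) then mkS a b eps a a false
  else mkS a b eps a a true.

Definition sej_init (T : nat) : sej_state := start_phase T 0 1 (1/2).

Definition played (s : sej_state) : R :=
  if s_final s then s_a s else s_m s.

Definition sej_high (T : nat) (s : sej_state) (act : bool) : sej_state :=
  if s_final s then s else
  if act then
    let m' := s_m s + s_eps s in
    if Rle_dec m' (s_b s) then
      mkS (s_a s) (s_b s) (s_eps s) m' (s_m s) false
    else (* inner loop ends because m > b; here m_prev = old m *)
      start_phase T (s_m s) (s_b s) (s_eps s ^ 2)
  else start_phase T (s_mprev s) (s_m s) (s_eps s ^ 2).

(* Expected number of rounds (among the next n) with action 1, i.e.
   sum over rounds of E[Pr(action 1 in round | history)], starting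
   from state s; the randomness is the signal (High w.p. prob_high). *)
Fixpoint sej_value (mu alpha qhat : R) (T n : nat) (s : sej_state) : R :=
  match n with
  | O => 0
  | S n' =>
      let m := played s in
      let pH := prob_high mu m in
      let aH := receiver_act mu alpha qhat (post_high mu m) in
      let aL := receiver_act mu alpha qhat post_low in
      pH * (if aH then 1 else 0) + (1 - pH) * (if aL then 1 else 0)
      + pH * sej_value mu alpha qhat T n' (sej_high T s aH)
      + (1 - pH) * sej_value mu alpha qhat T n' s
  end.

Definition sej_regret (mu alpha qhat mstar : R) (T : nat) : R :=
  INR T * Vstar mu mstar - sej_value mu alpha qhat T T (sej_init T).

(* Main.v *)
Require Import Defs.
From Stdlib Require Import Reals Lra Lia ZArith.
Open Scope R_scope.

Definition Hyp (mu alpha qhat mstar : R) : Prop :=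
  (0 < mu < 1) /\ (0 < alpha <= 1) /\ (mu < qhat < 1) /\
  alpha >= (qhat - mu) / (1 - mu) /\
  (1 - alpha) * mu + alpha * (mu / (mu + (1 - mu) * mstar)) = qhat.

Lemma hyp_D mu alpha qhat mstar : Hyp mu alpha qhat mstar ->
  mu <= mu + (1 - mu) * mstar <= 1.
Proof.
  intros [Hmu [Ha [Hq [Hal Heq]]]].
  set (D := mu + (1 - mu) * mstar) in *.
  destruct (Req_dec D 0) as [H0|H0].
  { rewrite H0 in Heq. unfold Rdiv in Heq. rewrite Rinv_0 in Heq. nra. }
  assert (Hk : alpha * (mu / D) = qhat - (1 - alpha) * mu) by lra.
  assert (Hkpos : 0 < qhat - (1 - alpha) * mu) by nra.
  assert (HD : D = alpha * mu / (qhat - (1 - alpha) * mu)).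
  { rewrite <- Hk. field. split; [exact H0| lra]. }
  assert (Hal' : alpha * (1 - mu) >= qhat - mu).
  { apply Rle_ge. apply Rge_le in Hal.
    apply (Rmult_le_compat_r (1 - mu)) in Hal; [|lra].
    unfold Rdiv in Hal. rewrite Rmult_assoc, Rinv_l in Hal; lra. }
  rewrite HD. split.
  - apply (Rmult_le_reg_r (qhat - (1 - alpha) * mu)); [lra|].
    unfold Rdiv. rewrite Rmult_assoc, Rinv_l; nra.
  - apply (Rmult_le_reg_r (qhat - (1 - alpha) * mu)); [lra|].
    unfold Rdiv. rewrite Rmult_assoc, Rinv_l; nra.
Qed.

Lemma hyp_mstar mu alpha qhat mstar : Hyp mu alpha qhat mstar -> 0 <= mstar <= 1.
Proof.
  intros H. pose proof (hyp_D _ _ _ _ H) as HD.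
  destruct H as [Hmu _]. split; nra.
Qed.

Lemma act_low mu alpha qhat mstar : Hyp mu alpha qhat mstar ->
  receiver_act mu alpha qhat post_low = false.
Proof.
  intros [Hmu [Ha [Hq _]]]. unfold receiver_act, post_low.
  destruct (Rle_dec _ _); [nra|reflexivity].
Qed.

Lemma act_high mu alpha qhat mstar m : Hyp mu alpha qhat mstar -> 0 <= m ->
  receiver_act mu alpha qhat (post_high mu m) =
  if Rle_dec m mstar then true else false.
Proof.
  intros H Hm. pose proof (hyp_D _ _ _ _ H) as HD.
  destruct H as [Hmu [Ha [Hq [_ Heq]]]].
  unfold receiver_act, post_high.
  assert (HDm : 0 < mu + (1 - mu) * m) by nra.
  set (Ds := mu + (1 - mu) * mstar) in *.
  set (Dm := mu + (1 - mu) * m) in *.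
  assert (E : forall x y, 0 < x -> 0 < y -> (mu / x <= mu / y <-> y <= x)).
  { intros x y Hx Hy. split; intro Hxy.
    - destruct (Rle_dec y x); auto. exfalso.
      assert (mu / y < mu / x).
      { unfold Rdiv. apply Rmult_lt_compat_l; [lra|].
        apply Rinv_lt_contravar; nra. } lra.
    - unfold Rdiv. apply Rmult_le_compat_l; [lra|].
      apply Rinv_le_contravar; lra. }
  destruct (Rle_dec m mstar) as [Hle|Hlt];
  destruct (Rle_dec qhat _) as [Hq'|Hq']; auto; exfalso.
  - apply Hq'. rewrite <- Heq.
    assert (mu / Ds <= mu / Dm) by (apply E; unfold Ds, Dm in *; nra).
    nra.
  - apply Hlt.
    assert (alpha * (mu / Ds) <= alpha * (mu / Dm)) by lra.
    assert (HH : mu / Ds <= mu / Dm) by (apply (Rmult_le_reg_l alpha); lra).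
    apply (proj1 (E Ds Dm ltac:(lra) ltac:(lra))) in HH. unfold Ds, Dm in HH.
    destruct (Rle_dec m mstar) as [|Hn]; auto. apply Rnot_le_lt in Hn. nra.
Qed.

Definition ee (k : nat) : R := (/ 2) ^ (2 ^ k).

Lemma ee_succ k : ee (S k) = ee k ^ 2.
Proof. unfold ee. rewrite <- pow_mult. f_equal. simpl. lia. Qed.

Lemma ee_bounds k : 0 < ee k <= / 2.
Proof.
  induction k.
  - unfold ee. simpl. lra.
  - rewrite ee_succ. simpl. nra.
Qed.

Definition XT (T : nat) : R := IZR (Rceil (log2R (log2R (INR T)))).

Lemma ceil_ge x : x <= IZR (Rceil x).
Proof.
  unfold Rceil. rewrite opp_IZR.
  destruct (base_Int_part (- x)). lra.
Qed.

Lemma log2_pow n : log2R (2 ^ n) = INR n.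
Proof.
  unfold log2R. rewrite ln_pow by lra. field.
  pose proof ln_lt_2. lra.
Qed.

Lemma log2_lt x y : 0 < x -> x < y -> log2R x < log2R y.
Proof.
  intros. unfold log2R. pose proof ln_lt_2.
  unfold Rdiv. apply Rmult_lt_compat_r.
  - apply Rinv_0_lt_compat. lra.
  - apply ln_increasing; lra.
Qed.

Lemma XT_pos T : (4 <= T)%nat -> 0 <= XT T.
Proof.
  intros HT. unfold XT.
  assert (H4 : 4 <= INR T) by (replace 4 with (INR 4) by (simpl; lra); apply le_INR; lia).
  assert (H1 : 2 <= log2R (INR T)).
  { replace 2 with (log2R (2 ^ 2)).
    - destruct (Req_dec (INR T) 4) as [E|E].
      + rewrite E. replace (2^2) with 4 by lra. lra.
      + apply Rlt_le, log2_lt; simpl; lra.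
    - rewrite log2_pow. simpl. lra. }
  assert (H2 : 1 <= log2R (log2R (INR T))).
  { replace 1 with (log2R (2 ^ 1)).
    - destruct (Req_dec (log2R (INR T)) 2) as [E|E].
      + rewrite E. replace (2^1) with 2 by lra. lra.
      + apply Rlt_le, log2_lt; simpl; lra.
    - rewrite log2_pow. simpl. lra. }
  pose proof (ceil_ge (log2R (log2R (INR T)))). lra.
Qed.

Lemma phase_bound T k : (4 <= T)%nat -> / INR T < ee k -> INR (S k) <= XT T.
Proof.
  intros HT Hk. unfold ee in Hk.
  assert (H4 : 4 <= INR T) by (replace 4 with (INR 4) by (simpl; lra); apply le_INR; lia).
  rewrite pow_inv in Hk.
  assert (Hp : 0 < 2 ^ (2 ^ k)) by (apply pow_lt; lra).
  assert (H1 : 2 ^ (2 ^ k) < INR T).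
  { destruct (Rlt_dec (2 ^ (2 ^ k)) (INR T)) as [|Hn]; auto. exfalso.
    apply Rnot_lt_le in Hn.
    assert (/ INR T >= / 2 ^ (2 ^ k)).
    { apply Rle_ge, Rinv_le_contravar; lra. } lra. }
  assert (H2 : INR (2 ^ k) < log2R (INR T)).
  { rewrite <- log2_pow. apply log2_lt; auto. }
  assert (H3 : INR k < log2R (log2R (INR T))).
  { rewrite <- log2_pow. rewrite pow_INR in H2. simpl in H2.
    apply log2_lt; auto. apply pow_lt; lra. }
  pose proof (ceil_ge (log2R (log2R (INR T)))).
  unfold XT. rewrite INR_IZR_INZ.
  assert (Z.of_nat k < Rceil (log2R (log2R (INR T))))%Z.
  { apply lt_IZR. rewrite <- INR_IZR_INZ. lra. }
  apply IZR_le. lia.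
Qed.

Definition FF (e d : R) : R := d * d / (2 * e) + d / 2 + e / 8.

Lemma FF_step e d : 0 < e -> FF e d = d + FF e (d - e).
Proof. intros. unfold FF. field. lra. Qed.

Lemma FF_ge e d : 0 < e -> d <= FF e d.
Proof.
  intros. unfold FF.
  assert (FF e d - d = (d - e/2) * (d - e/2) / (2 * e)) by (unfold FF; field; lra).
  unfold FF in H0.
  assert (0 <= (d - e/2) * (d - e/2) / (2 * e)).
  { unfold Rdiv. apply Rmult_le_pos.
    - pose proof (Rle_0_sqr (d - e/2)). unfold Rsqr in *. lra.
    - left. apply Rinv_0_lt_compat. lra. }
  lra.
Qed.

Lemma FF_new e d : 0 < e <= / 2 -> 0 <= d <= e -> FF (e ^ 2) d <= 1.
Proof.
  intros He Hd. unfold FF.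
  assert (d * d / (2 * e ^ 2) <= / 2).
  { apply (Rmult_le_reg_r (2 * e ^ 2)). simpl; nra.
    unfold Rdiv. rewrite Rmult_assoc, Rinv_l. simpl; nra. simpl; nra. }
  simpl in *. nra.
Qed.

Lemma FF_init d : 0 <= d <= 1 -> FF (/ 2) d <= 2.
Proof.
  intros Hd. unfold FF.
  replace (d * d / (2 * / 2)) with (d * d) by (field).
  nra.
Qed.

Definition AA (mu : R) : R := (1 - mu) / mu.
Definition cc (mu : R) : R := (1 - mu) / mu + 1.

Definition PP (mu mstar : R) (s : sej_state) : R :=
  if Rle_dec (s_m s) mstar then AA mu * FF (s_eps s) (mstar - s_m s) + 1 else 1.

Definition Psi (mu mstar : R) (T : nat) (s : sej_state) (k : nat) : R :=
  if s_final s then 0 else PP mu mstar s + cc mu * (XT T - INR k).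

Definition Inv (mstar : R) (T : nat) (s : sej_state) (k : nat) : Prop :=
  if s_final s then 0 <= s_a s <= mstar /\ mstar <= s_b s /\ s_b s - s_a s <= / INR T
  else 0 <= s_a s /\ s_a s <= s_mprev s /\ s_mprev s <= mstar /\
       s_mprev s <= s_m s /\ s_m s - s_mprev s <= s_eps s /\ s_m s <= s_b s /\
       mstar <= s_b s /\ s_b s <= 1 /\ s_eps s = ee k /\ INR k <= XT T.

Lemma AA_pos mu : 0 < mu < 1 -> 0 <= AA mu.
Proof. intros. unfold AA. unfold Rdiv. apply Rmult_le_pos. lra.
  left; apply Rinv_0_lt_compat; lra. Qed.

Lemma AA_mu mu : 0 < mu < 1 -> AA mu * mu = 1 - mu.
Proof. intros. unfold AA. field. lra. Qed.

Lemma start_cases T k a b e mstar :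
  (4 <= T)%nat -> 0 <= a <= mstar -> mstar <= b -> b <= 1 -> b - a <= e ->
  e = ee k ->
  (Inv mstar T (start_phase T a b (e ^ 2)) (S k) /\
   ((s_final (start_phase T a b (e ^ 2)) = true) \/
    (s_final (start_phase T a b (e ^ 2)) = false /\
     s_m (start_phase T a b (e ^ 2)) = a /\ s_eps (start_phase T a b (e ^ 2)) = e ^ 2))).
Proof.
  intros HT Ha Hb Hb1 Hw He.
  pose proof (ee_bounds k).
  unfold start_phase. destruct (Rlt_dec (/ INR T) (b - a)) as [Hl|Hl].
  - split; [|right; simpl; auto].
    unfold Inv; simpl. repeat split; try lra.
    + simpl; nra.
    + rewrite ee_succ, He. reflexivity.
    + apply phase_bound; auto. lra.
  - split; [|left; reflexivity].
    unfold Inv; simpl. repeat split; lra.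
Qed.

Lemma PP_new mu mstar T a b e :
  0 < mu < 1 -> 0 <= a <= mstar -> mstar - a <= e -> 0 < e <= / 2 ->
  s_final (start_phase T a b (e ^ 2)) = false ->
  PP mu mstar (start_phase T a b (e ^ 2)) <= cc mu.
Proof.
  intros Hmu Ha Hd He Hf.
  unfold start_phase in *. destruct (Rlt_dec _ _); simpl in Hf; try discriminate.
  unfold PP; cbn [s_m s_eps]. destruct (Rle_dec a mstar); [|lra].
  pose proof (FF_new e (mstar - a) He ltac:(lra)).
  pose proof (AA_pos mu Hmu). replace (cc mu) with (AA mu + 1) by reflexivity.
  assert (AA mu * FF (e ^ 2) (mstar - a) <= AA mu * 1) by (apply Rmult_le_compat_l; lra).
lra.
Qed.

Lemma Psi_ge_PP mu mstar T s k : 0 < mu < 1 -> Inv mstar T s k -> s_final s = false ->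
  PP mu mstar s <= Psi mu mstar T s k.
Proof.
  intros Hmu HI Hf. unfold Psi. rewrite Hf. unfold Inv in HI. rewrite Hf in HI.
  assert (0 <= cc mu) by (pose proof (AA_pos mu Hmu); unfold AA, cc in *; lra).
  assert (0 <= cc mu * (XT T - INR k)) by (apply Rmult_le_pos; lra). lra.
Qed.

Lemma step_nf mu alpha qhat mstar T s k :
  Hyp mu alpha qhat mstar -> (4 <= T)%nat -> Inv mstar T s k -> s_final s = false ->
  exists k', Inv mstar T (sej_high T s (receiver_act mu alpha qhat (post_high mu (s_m s)))) k' /\
  Vstar mu mstar - prob_high mu (s_m s) *
     (if receiver_act mu alpha qhat (post_high mu (s_m s)) then 1 else 0)
  + prob_high mu (s_m s) *
     (Psi mu mstar T (sej_high T s (receiver_act mu alpha qhat (post_high mu (s_m s)))) k'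
      - Psi mu mstar T s k) <= 0.
Proof.
  intros H HT HI Hf.
  pose proof (hyp_mstar _ _ _ _ H) as Hms.
  pose proof H as [Hmu _].
  pose proof (AA_pos mu Hmu) as HA. pose proof (AA_mu mu Hmu) as HAm.
  assert (Hc : cc mu = AA mu + 1) by reflexivity.
  pose proof (Psi_ge_PP mu mstar T s k Hmu HI Hf) as HPsi.
  destruct s as [a b e m mp f]; cbn [s_final s_a s_b s_eps s_m s_mprev] in *; subst f.
  unfold Inv in HI; cbn [s_final s_a s_b s_eps s_m s_mprev] in HI.
  destruct HI as (Ha & Hamp & Hmps & Hmpm & Hmmp & Hmb & Hsb & Hb1 & He & Hk).
  pose proof (ee_bounds k) as Heb.
  rewrite (act_high _ _ _ _ m H ltac:(lra)).
  unfold Vstar, prob_high.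
  unfold sej_high; cbn [s_final s_a s_b s_eps s_m s_mprev].
  destruct (Rle_dec m mstar) as [Hle|Hlt].
  -
    assert (HPs : PP mu mstar (mkS a b e m mp false) = AA mu * FF e (mstar - m) + 1).
    { unfold PP; cbn [s_m s_eps]. destruct (Rle_dec m mstar); [reflexivity|contradiction]. }
    pose proof (FF_ge e (mstar - m) ltac:(lra)) as HFge.
    assert (HAd : AA mu * (mstar - m) <= AA mu * FF e (mstar - m)) by (apply Rmult_le_compat_l; lra).
    assert (Key : forall D, AA mu * (mstar - m) <= D ->
       mu + (1 - mu) * mstar - (mu + (1 - mu) * m) * 1 + (mu + (1 - mu) * m) * (- D) <= 0).
    { intros D HD.
      assert (mu * (AA mu * (mstar - m)) <= (mu + (1 - mu) * m) * D).
      { apply Rmult_le_compat; try lra. apply Rmult_le_pos; lra. nra. }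
      nra. }
    destruct (Rle_dec (m + e) b) as [Hmb'|Hmb'].
    + exists k. split.
      * unfold Inv; cbn [s_final s_a s_b s_eps s_m s_mprev]. repeat split; lra.
      * unfold Psi; cbn [s_final]. rewrite HPs.
        unfold PP; cbn [s_m s_eps].
        destruct (Rle_dec (m + e) mstar) as [H2|H2].
        -- rewrite (FF_step e (mstar - m)) by lra.
           replace (mstar - m - e) with (mstar - (m + e)) by ring.
           match goal with |- ?x <= 0 => replace x with
             (mu + (1 - mu) * mstar - (mu + (1 - mu) * m) * 1 +
              (mu + (1 - mu) * m) * (- (AA mu * (mstar - m)))) by ring end.
           apply Key. lra.
        -- match goal with |- ?x <= 0 => replace x with
             (mu + (1 - mu) * mstar - (mu + (1 - mu) * m) * 1 +
              (mu + (1 - mu) * m) * (- (AA mu * FF e (mstar - m)))) by ring end.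
           apply Key. lra.
    + exists (S k).
      destruct (start_cases T k m b e mstar HT ltac:(lra) ltac:(lra) ltac:(lra) ltac:(lra) He)
        as [HI' [Hfin | [Hfin _]]].
      * split; auto. unfold Psi at 1. rewrite Hfin.
        rewrite HPs in HPsi.
        match goal with |- ?x <= 0 => replace x with
          (mu + (1 - mu) * mstar - (mu + (1 - mu) * m) * 1 +
           (mu + (1 - mu) * m) * (- (Psi mu mstar T (mkS a b e m mp false) k))) by ring end.
        apply Key. lra.
      * split; auto.
        pose proof (PP_new mu mstar T m b e Hmu ltac:(lra) ltac:(lra) ltac:(lra) Hfin) as HPn.
        unfold Psi at 1 2. rewrite Hfin. cbn [s_final]. rewrite HPs. rewrite S_INR.
        match goal with |- ?x <= 0 => replace x with
          (mu + (1 - mu) * mstar - (mu + (1 - mu) * m) * 1 +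
           (mu + (1 - mu) * m) * (- (AA mu * FF e (mstar - m) + 1 + cc mu
              - PP mu mstar (start_phase T m b (e ^ 2))))) by ring end.
        apply Key. lra.
  -
    apply Rnot_le_lt in Hlt.
    assert (HPs : PP mu mstar (mkS a b e m mp false) = 1).
    { unfold PP; cbn [s_m s_eps]. destruct (Rle_dec m mstar); [lra|reflexivity]. }
    assert (Key : forall D, 1 <= D ->
       mu + (1 - mu) * mstar - (mu + (1 - mu) * m) * 0 + (mu + (1 - mu) * m) * (- D) <= 0).
    { intros D HD. assert ((mu + (1 - mu) * m) * 1 <= (mu + (1 - mu) * m) * D)
        by (apply Rmult_le_compat_l; nra). nra. }
    exists (S k).
    destruct (start_cases T k mp m e mstar HT ltac:(lra) ltac:(lra) ltac:(lra) ltac:(lra) He)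
        as [HI' [Hfin | [Hfin _]]].
    * split; auto. unfold Psi at 1. rewrite Hfin.
      rewrite HPs in HPsi.
      match goal with |- ?x <= 0 => replace x with
        (mu + (1 - mu) * mstar - (mu + (1 - mu) * m) * 0 +
         (mu + (1 - mu) * m) * (- (Psi mu mstar T (mkS a b e m mp false) k))) by ring end.
      apply Key. lra.
    * split; auto.
      pose proof (PP_new mu mstar T mp m e Hmu ltac:(lra) ltac:(lra) ltac:(lra) Hfin) as HPn.
      unfold Psi at 1 2. rewrite Hfin. cbn [s_final]. rewrite HPs. rewrite S_INR.
      match goal with |- ?x <= 0 => replace x with
        (mu + (1 - mu) * mstar - (mu + (1 - mu) * m) * 0 +
         (mu + (1 - mu) * m) * (- (1 + cc mu
            - PP mu mstar (start_phase T mp m (e ^ 2))))) by ring end.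
      apply Key. lra.
Qed.

Lemma PP_nonneg mu mstar s : 0 < mu < 1 -> 0 < s_eps s -> 0 <= PP mu mstar s.
Proof.
  intros Hmu He. unfold PP. destruct (Rle_dec _ _); [|lra].
  pose proof (FF_ge (s_eps s) (mstar - s_m s) He).
  pose proof (AA_pos mu Hmu).
  assert (0 <= AA mu * FF (s_eps s) (mstar - s_m s)) by (apply Rmult_le_pos; lra). lra.
Qed.

Lemma Psi_nonneg mu mstar T s k : 0 < mu < 1 -> Inv mstar T s k -> 0 <= Psi mu mstar T s k.
Proof.
  intros Hmu HI. destruct (s_final s) eqn:E.
  - unfold Psi. rewrite E. lra.
  - pose proof (Psi_ge_PP mu mstar T s k Hmu HI E).
    unfold Inv in HI. rewrite E in HI.
    destruct HI as (_ & _ & _ & _ & _ & _ & _ & _ & He & _).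
    pose proof (ee_bounds k).
    pose proof (PP_nonneg mu mstar s Hmu ltac:(lra)). lra.
Qed.

Lemma main_ind mu alpha qhat mstar T :
  Hyp mu alpha qhat mstar -> (4 <= T)%nat ->
  forall n s k, Inv mstar T s k ->
  INR n * Vstar mu mstar - sej_value mu alpha qhat T n s
    <= Psi mu mstar T s k + INR n * ((1 - mu) / INR T).
Proof.
  intros H HT n. pose proof H as [Hmu _].
  pose proof (hyp_mstar _ _ _ _ H) as Hms.
  assert (HT4 : 4 <= INR T) by (replace 4 with (INR 4) by (simpl; lra); apply le_INR; lia).
  assert (Hd : 0 <= (1 - mu) / INR T).
  { unfold Rdiv. apply Rmult_le_pos; [lra|]. left. apply Rinv_0_lt_compat. lra. }
  induction n as [|n IH]; intros s k HI.
  - simpl. pose proof (Psi_nonneg mu mstar T s k Hmu HI). lra.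
  - cbn [sej_value]. rewrite (act_low _ _ _ _ H). rewrite S_INR.
    destruct (s_final s) eqn:E.
    + unfold played. rewrite E.
      pose proof HI as HI'. unfold Inv in HI'. rewrite E in HI'.
      destruct HI' as (Ha & Hb & Hw).
      rewrite (act_high _ _ _ _ (s_a s) H ltac:(lra)).
      destruct (Rle_dec (s_a s) mstar) as [_|C]; [|lra].
      assert (Hss : sej_high T s true = s) by (unfold sej_high; rewrite E; reflexivity).
      rewrite Hss.
      pose proof (IH s k HI) as IH1.
      assert (HP : Psi mu mstar T s k = 0) by (unfold Psi; rewrite E; reflexivity).
      rewrite HP in *.
      assert (Hloss : Vstar mu mstar - prob_high mu (s_a s) <= (1 - mu) / INR T).
      { unfold Vstar, prob_high. unfold Rdiv.
        assert ((1 - mu) * (mstar - s_a s) <= (1 - mu) * / INR T)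
          by (apply Rmult_le_compat_l; lra). lra. }
      lra.
    + unfold played. rewrite E.
      destruct (step_nf mu alpha qhat mstar T s k H HT HI E) as [k' [HI' Hst]].
      set (pH := prob_high mu (s_m s)) in *.
      set (aH := receiver_act mu alpha qhat (post_high mu (s_m s))) in *.
      set (s' := sej_high T s aH) in *.
      pose proof (IH s' k' HI') as IH1.
      pose proof (IH s k HI) as IH2.
      pose proof HI as HI2. unfold Inv in HI2. rewrite E in HI2.
      destruct HI2 as (Ha & Hamp & Hmps & Hmpm & _ & Hmb & _ & Hb1 & _).
      assert (HpH : 0 <= pH <= 1) by (unfold pH, prob_high; split; nra).
      set (v' := sej_value mu alpha qhat T n s') in *.
      set (v := sej_value mu alpha qhat T n s) in *.
      set (dl := (1 - mu) / INR T) in *.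
      set (V := Vstar mu mstar) in *.
      assert (P1 : pH * (INR n * V - v') <= pH * (Psi mu mstar T s' k' + INR n * dl))
        by (apply Rmult_le_compat_l; lra).
      assert (P2 : (1 - pH) * (INR n * V - v) <= (1 - pH) * (Psi mu mstar T s k + INR n * dl))
        by (apply Rmult_le_compat_l; lra).
      set (r := if aH then 1 else 0) in *.
      assert (Hs0 : 0 <= pH * dl) by (apply Rmult_le_pos; lra).
      nra.
Qed.

Theorem propositionF1 (mu alpha qhat mstar : R) (T : nat) :
  0 < mu < 1 -> 0 < alpha <= 1 -> mu < qhat < 1 ->
  alpha >= (qhat - mu) / (1 - mu) ->
  (1 - alpha) * mu + alpha * (mu / (mu + (1 - mu) * mstar)) = qhat ->
  (4 <= T)%nat ->
  sej_regret mu alpha qhat mstar T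
    <= ((1 - mu) / mu + 1) * (2 + IZR (Rceil (log2R (log2R (INR T))))) + 1.
Proof.
  intros Hmu Ha Hq Hal Heq HT.
  assert (H : Hyp mu alpha qhat mstar) by (repeat split; auto; lra).
  pose proof (hyp_mstar _ _ _ _ H) as Hms.
  assert (HT4 : 4 <= INR T) by (replace 4 with (INR 4) by (simpl; lra); apply le_INR; lia).
  assert (Hinit : sej_init T = mkS 0 1 (/ 2) 0 0 false).
  { unfold sej_init, start_phase. destruct (Rlt_dec _ _) as [_|C].
    - f_equal. field.
    - exfalso. apply C. assert (/ INR T < 1).
      { rewrite <- Rinv_1. apply Rinv_lt_contravar; lra. } lra. }
  assert (HI : Inv mstar T (sej_init T) 0).
  { rewrite Hinit. unfold Inv; cbn [s_final s_a s_b s_eps s_m s_mprev].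
    pose proof (XT_pos T HT). repeat split; try lra.
    unfold ee. simpl. ring. simpl. lra. }
  pose proof (main_ind mu alpha qhat mstar T H HT T (sej_init T) 0 HI) as M.
  unfold sej_regret. rewrite Hinit.
  assert (E1 : INR T * ((1 - mu) / INR T) = 1 - mu) by (field; lra).
  rewrite E1 in M.
  rewrite Hinit in M. unfold Psi, PP in M; cbn [s_final s_m s_eps] in M.
  destruct (Rle_dec 0 mstar) as [_|C]; [|lra].
  pose proof (FF_init (mstar - 0) ltac:(lra)).
  pose proof (AA_pos mu Hmu).
  assert (AA mu * FF (/ 2) (mstar - 0) <= AA mu * 2) by (apply Rmult_le_compat_l; lra).
  replace (cc mu) with (AA mu + 1) in M by reflexivity.
  unfold XT in M. simpl INR in M. unfold AA in *. lra.
Qed.
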